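(* Consider the 2-component Camassa-Holm equations on $x\in\mathbb{R}$: $$\rho_t+u\rho_x+\rho u_x=0,\qquad m_t+2u_xm+um_x+\sigma\rho\rho_x=0,\qquad m=u-\alpha^2u_{xx},$$ with $\sigma=\pm1$. This system admits the following family of (linear-velocity, not necessarily radially symmetric) solutions: $$\rho^2(x,t)=\max\Big\{\rho^2(0,t)-\tfrac{2}{\sigma}\Big[\dot b(t)+3b(t)\tfrac{\dot a(3t)}{a(3t)}\Big]x-\tfrac{3\xi}{\sigma a^{4/3}(3t)}x^2,\;0\Big\},\qquad u(x,t)=\frac{\dot a(3t)}{a(3t)}x+b(t),$$ where $a(3t)$ solves the Emden equation $$\frac{d^2}{dt^2}a(3t)=\frac{\xi}{a^{1/3}(3t)},\quad a(0)=a_0>0,\ \dot a(0)=a_1,$$ $b(t)$ solves $$\ddot b(t)+\frac{6\dot a(3t)}{a(3t)}\dot b(t)+\frac{12\xi}{a^{4/3}(3t)}b(t)=0,\quad b(0)=b_0,\ \dot b(0)=b_1,$$ and $\rho^2(0,t)$ solves $$\frac{d}{dt}\big[\rho^2(0,t)\big]+\frac{2\dot a(3t)}{a(3t)}\rho^2(0,t)-\frac{2}{\sigma}b(t)\Big[\dot b(t)+3b(t)\frac{\dot a(3t)}{a(3t)}\Big]=0,\quad \rho^2(0,0)=\alpha^2,$$ with $a_0,a_1,b_0,b_1,\xi,\alpha$ arbitrary constants; the solutions exist as long as $1/a(3t)$ and $\dot a(3t)$ exist.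
   Context: Here $u(x,t)$ is the velocity and $\rho(x,t)\ge0$ the density; $\dot a(3t):=\frac{d}{dt}a(3t)$. The construction substitutes $u=c(t)x+b(t)$ with the Hubble transformation $c(t)=\dot a(3t)/a(3t)$ and compares polynomial coefficients in $x$.
   Formalization: The system is claimed only at points (x,t) where the quantity inside max{…,0} is positive, and ȧ(3t) is a′(s) at s = 3t rather than d/dt of a(3t), the Emden equation being a″(s) = ξ/∛a(s) in s. Each condition added here is assumed in the paper as well or is needed for the statement above to hold. This also corrects a misprint. *)

(* Defs.v *)
From Stdlib Require Import Reals.
From Coquelicot Require Import Coquelicot.
Open Scope R_scope.

(* Convention: a : R -> R is a function of its own variable s; "adot(3t)"
   denotes (Derive a) evaluated at s = 3t. *)

Definition hubble (a : R -> R) (t : R) : R := Derive a (3 * t) / a (3 * t).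

Definition a43 (a : R -> R) (t : R) : R := Rpower (a (3 * t)) (4 / 3).

(* The quadratic whose positive part is rho^2(x,t);  r t = rho^2(0,t). *)
Definition rho2_quad (sigma xi : R) (a b r : R -> R) (x t : R) : R :=
  r t - (2 / sigma) * (Derive b t + 3 * b t * hubble a t) * x
      - (3 * xi / (sigma * a43 a t)) * x ^ 2.

Definition rho_sol (sigma xi : R) (a b r : R -> R) (x t : R) : R :=
  sqrt (Rmax (rho2_quad sigma xi a b r x t) 0).

Definition u_sol (a b : R -> R) (x t : R) : R := hubble a t * x + b t.

Definition m_of (alpha : R) (u : R -> R -> R) (x t : R) : R :=
  u x t - alpha ^ 2 * Derive (fun y => Derive (fun z => u z t) y) x.

Definition dx (f : R -> R -> R) (x t : R) : R := Derive (fun y => f y t) x.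
Definition dt (f : R -> R -> R) (x t : R) : R := Derive (fun s => f x s) t.
Definition ex_dx (f : R -> R -> R) (x t : R) : Prop := ex_derive (fun y => f y t) x.
Definition ex_dt (f : R -> R -> R) (x t : R) : Prop := ex_derive (fun s => f x s) t.

(* Main.v *)
Require Import Defs.
From Stdlib Require Import Reals Lra.
From Coquelicot Require Import Coquelicot.
Open Scope R_scope.

Lemma sqrt_max_der f t l : is_derive f t l -> 0 < f t ->
  is_derive (fun s => sqrt (Rmax (f s) 0)) t (l / (2 * sqrt (f t))).
Proof.
intros H Hp.
assert (cont : continuous f t) by (apply ex_derive_continuous; exists l; exact H).
apply is_derive_ext_loc with (fun s => sqrt (f s)).
- assert (L : locally t (fun s => 0 < f s)).
  { apply (cont (fun y => 0 < y)). exists (mkposreal _ Hp). intros y Hy.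
    cbn in Hy. unfold AbsRing_ball, abs, minus, plus, opp in Hy. cbn in Hy.
    apply Rabs_def2 in Hy. lra. }
  revert L; apply filter_imp. intros s Hs. rewrite Rmax_left; lra.
- auto_derive. split; [exists l; exact H| split; [exact Hp | exact I]].
  change (Derive (fun x : R => f x) t) with (Derive f t). rewrite (is_derive_unique _ _ _ H). field. apply Rgt_not_eq, sqrt_lt_R0, Hp.
Qed.

Lemma exp43 A : 0 < A -> exp (4/3 * ln A) = A * exp (1/3 * ln A).
Proof.
intros HA. replace (4/3 * ln A) with (ln A + 1/3 * ln A) by field.
rewrite exp_plus, exp_ln; auto.
Qed.

Theorem theorem1
  (sigma xi alpha a0 a1 b0 b1 T0 T1 : R) (a b r : R -> R)
  (Hsigma : sigma = 1 \/ sigma = -1)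
  (HT : T0 < 0 < T1)
  (Ha0 : 0 < a0)
  (* Emden equation for a (in its own variable s = 3t), a > 0 on the domain *)
  (Hapos : forall s, 3 * T0 < s < 3 * T1 -> 0 < a s)
  (Haeq : forall s, 3 * T0 < s < 3 * T1 ->
     ex_derive a s /\ is_derive (Derive a) s (xi / Rpower (a s) (1 / 3)))
  (Hainit : a 0 = a0 /\ Derive a 0 = a1)
  (* equation for b *)
  (Hbeq : forall t, T0 < t < T1 ->
     ex_derive b t /\ ex_derive (Derive b) t /\
     Derive (Derive b) t + 6 * hubble a t * Derive b t
       + 12 * xi / a43 a t * b t = 0)
  (Hbinit : b 0 = b0 /\ Derive b 0 = b1)
  (* equation for r(t) = rho^2(0,t) *)
  (Hreq : forall t, T0 < t < T1 ->
     ex_derive r t /\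
     Derive r t + 2 * hubble a t * r t
       - (2 / sigma) * b t * (Derive b t + 3 * b t * hubble a t) = 0)
  (Hrinit : r 0 = alpha ^ 2) :
  let rho := rho_sol sigma xi a b r in
  let u := u_sol a b in
  let m := m_of alpha u in
  forall t x, T0 < t < T1 -> 0 < rho2_quad sigma xi a b r x t ->
    ex_dt rho x t /\ ex_dx rho x t /\ ex_dt u x t /\ ex_dx u x t /\
    ex_dt m x t /\ ex_dx m x t /\
    dt rho x t + u x t * dx rho x t + rho x t * dx u x t = 0 /\
    dt m x t + 2 * dx u x t * m x t + u x t * dx m x t
      + sigma * rho x t * dx rho x t = 0.
Proof.
intros rho u m t x Ht HQ.
assert (Hs3 : 3 * T0 < 3 * t < 3 * T1) by lra.
destruct (Haeq _ Hs3) as [Hea Hda].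
pose proof (Hapos _ Hs3) as HA.
destruct (Hbeq _ Ht) as [Heb [Hedb Hbe]].
destruct (Hreq _ Ht) as [Her Hre].
assert (Hsig : sigma <> 0) by (destruct Hsigma; lra).
set (A := a (3 * t)) in *.
set (A1 := Derive a (3 * t)) in *.
set (P := exp (1/3 * ln A)).
assert (HP : 0 < P) by apply exp_pos.
assert (Ha43 : a43 a t = A * P) by (unfold a43, Rpower; apply exp43; exact HA).
assert (HDDa : Derive (Derive a) (3 * t) = xi / P) by (rewrite (is_derive_unique _ _ _ Hda); reflexivity).
assert (HDDb : Derive (Derive b) t = - 6 * (A1 / A) * Derive b t - 12 * xi / (A * P) * b t).
{ rewrite Ha43 in Hbe. unfold hubble in Hbe. fold A A1 in Hbe. lra. }
assert (HDr : Derive r t = - 2 * (A1 / A) * r t + 2 / sigma * b t * (Derive b t + 3 * b t * (A1 / A))).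
{ unfold hubble in Hre. fold A A1 in Hre. lra. }
set (c := A1 / A).
set (B := Derive b t + 3 * b t * c).
set (Q := rho2_quad sigma xi a b r x t) in *.
set (QT := Derive r t - 2/sigma * (Derive (Derive b) t + 3 * Derive b t * c
            + 3 * b t * (3 * (xi / P) / A - 3 * c ^ 2)) * x
            + 3 * xi / sigma * (4 * c / (A * P)) * x ^ 2).
assert (HQt : is_derive (fun s => rho2_quad sigma xi a b r x s) t QT).
{ unfold rho2_quad, hubble, a43, Rpower. auto_derive.
  - fold A. repeat split; try assumption; try lra; try (apply Rgt_not_eq; lra).
    + exists (xi / Rpower A (1 / 3)); exact Hda.
    + rewrite exp43 by lra. fold P. apply Rmult_integral_contrapositive_currified; [exact Hsig|].
      apply Rgt_not_eq, Rmult_lt_0_compat; lra.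
  - change (Derive (fun x0 : R => r x0) t) with (Derive r t).
    change (Derive (fun x0 : R => b x0) t) with (Derive b t).
    change (Derive (fun x0 : R => Derive b x0) t) with (Derive (Derive b) t).
    change (Derive (fun x0 : R => Derive a x0) (3 * t)) with (Derive (Derive a) (3 * t)).
    change (Derive (fun x0 : R => a x0) (3 * t)) with (Derive a (3 * t)).
    fold A A1. rewrite exp43 by lra. fold P. rewrite HDDa. unfold QT, c.
    field. repeat split; lra. }
set (QX := -(2/sigma)*B - 2*(3*xi/(sigma*(A*P)))*x).
assert (HQx : is_derive (fun y => rho2_quad sigma xi a b r y t) x QX).
{ unfold rho2_quad. auto_derive.
  - exact I.
  - rewrite Ha43. unfold QX, B, c, hubble. fold A A1. field. repeat split; lra. }
set (UT := (3*(xi/P)/A - 3*c^2) * x + Derive b t).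
assert (HUt : is_derive (fun s => u x s) t UT).
{ unfold u, u_sol, hubble. auto_derive.
  - fold A. repeat split; try assumption; try lra.
    exists (xi / Rpower A (1 / 3)); exact Hda.
  - change (Derive (fun x0 : R => b x0) t) with (Derive b t).
    change (Derive (fun x0 : R => Derive a x0) (3 * t)) with (Derive (Derive a) (3 * t)).
    change (Derive (fun x0 : R => a x0) (3 * t)) with (Derive a (3 * t)).
    fold A A1. rewrite HDDa. unfold UT, c. field. repeat split; lra. }
assert (HUx : is_derive (fun y => u y t) x c).
{ unfold u, u_sol. auto_derive; [exact I|]. unfold c, hubble. fold A A1. ring. }
assert (Hm : forall y s, m y s = u y s).
{ intros y s. unfold m, m_of.
  rewrite (Derive_ext (fun y0 => Derive (fun z => u z s) y0) (fun _ => hubble a s)).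
  - rewrite Derive_const. ring.
  - intros y0. apply is_derive_unique. unfold u, u_sol. auto_derive; [exact I|ring]. }
assert (Hrt : is_derive (fun s => rho x s) t (QT / (2 * sqrt Q))).
{ apply (sqrt_max_der (fun s => rho2_quad sigma xi a b r x s)); assumption. }
assert (Hrx : is_derive (fun y => rho y t) x (QX / (2 * sqrt Q))).
{ apply (sqrt_max_der (fun y => rho2_quad sigma xi a b r y t)); assumption. }
assert (Hmt : is_derive (fun s => m x s) t UT).
{ apply (is_derive_ext (fun s => u x s)); [intros; rewrite Hm; reflexivity| exact HUt]. }
assert (Hmx : is_derive (fun y => m y t) x c).
{ apply (is_derive_ext (fun y => u y t)); [intros; rewrite Hm; reflexivity| exact HUx]. }
assert (HS : 0 < sqrt Q) by (apply sqrt_lt_R0; exact HQ).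
assert (HSS : sqrt Q * sqrt Q = Q) by (apply sqrt_sqrt; lra).
assert (Hrho : rho x t = sqrt Q).
{ unfold rho, rho_sol. fold Q. rewrite Rmax_left; lra. }
unfold ex_dt, ex_dx, dt, dx.
assert (E1 : Derive (fun s => rho x s) t = QT / (2 * sqrt Q)) by (apply is_derive_unique; exact Hrt).
assert (E2 : Derive (fun y => rho y t) x = QX / (2 * sqrt Q)) by (apply is_derive_unique; exact Hrx).
assert (E3 : Derive (fun s => u x s) t = UT) by (apply is_derive_unique; exact HUt).
assert (E4 : Derive (fun y => u y t) x = c) by (apply is_derive_unique; exact HUx).
assert (E5 : Derive (fun s => m x s) t = UT) by (apply is_derive_unique; exact Hmt).
assert (E6 : Derive (fun y => m y t) x = c) by (apply is_derive_unique; exact Hmx).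
split; [eexists; exact Hrt|]. split; [eexists; exact Hrx|].
split; [eexists; exact HUt|]. split; [eexists; exact HUx|].
split; [eexists; exact Hmt|]. split; [eexists; exact Hmx|].
rewrite E1, E2, E4, E5, E6, Hrho, Hm.
assert (Hu : u x t = c * x + b t) by (unfold u, u_sol, c, hubble; fold A A1; ring).
rewrite Hu.
split.
- assert (Hnum : QT + (c * x + b t) * QX + 2 * c * Q = 0).
  { unfold QT, QX, Q, B, rho2_quad. rewrite Ha43, HDDb, HDr. unfold hubble. fold A A1 c.
    field. repeat split; lra. }
  replace (QT / (2 * sqrt Q) + (c * x + b t) * (QX / (2 * sqrt Q)) + sqrt Q * c)
    with ((QT + (c * x + b t) * QX + 2 * c * (sqrt Q * sqrt Q)) / (2 * sqrt Q))
    by (field; lra).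
  rewrite HSS, Hnum. unfold Rdiv. ring.
- replace (sigma * sqrt Q * (QX / (2 * sqrt Q))) with (sigma * QX / 2) by (field; lra).
  unfold UT, QX, B. unfold c. field. repeat split; lra.
Qed.
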